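(* For every $\gamma\in[0,1]$, the Equal Filling Till Threshold (EFTT) algorithm with threshold $\gamma$ (described in the context) is $\left(1 - \frac{e^{\gamma-1}}{\gamma+1}\right)$-USW, i.e., on every instance the fractional matching $X$ it outputs satisfies $\mathrm{usw}(X)\ge \left(1 - \frac{e^{\gamma-1}}{\gamma+1}\right)\mathrm{usw}(X^* )$ for every fractional matching $X^*$ of the instance.
   Context: Online class matching (divisible setting): an instance is a bipartite graph $G=(N,M,E)$ with known agents $N$, items $M$, $E\subseteq M\times N$ ($a$ likes $o$ iff $(o,a)\in E$); agents are partitioned into $k$ known classes $N_1,\dots,N_k$. Items arrive one at a time in adversarial order; upon arrival of $o$ its set of liking agents is revealed and fractions of $o$ must be irrevocably assigned to agents liking it. A fractional matching is $X=(x_{o,a})\in[0,1]^{M\times N}$ supported on $E$ with $\sum_a x_{o,a}\le1$ for each item and $\sum_o x_{o,a}\le 1$ for each agent; $\deg_X(v)$ denotes the sum of $x$ over edges incident to $v$; an agent is saturated if its degree is $1$. $V_i(X)=\sum_{a\in N_i}\sum_o x_{o,a}$ and $\mathrm{usw}(X)=\sum_i V_i(X)$. EFTT with threshold $\gamma$: the matching is increased continuously (water-filling). Upon arrival of item $o$: Phase I: let $Z_\gamma$ be the set of classes containing at least one agent that likes $o$ and has current degree less than $\gamma$. While $Z_\gamma\neq\emptyset$ and $o$ is not fully assigned, continuously assign mass of $o$, splitting it equally among the classes in $Z_\gamma$; within each class $i\in Z_\gamma$, the mass goes to the agent(s) of class $i$ liking $o$ with minimum current degree; a class is removed from $Z_\gamma$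 once it no longer has an agent liking $o$ with degree less than $\gamma$. Phase II: once $Z_\gamma=\emptyset$, continuously assign the remaining mass of $o$ to the unsaturated agent(s) liking $o$ with smallest current degree, regardless of class, until $o$ is fully assigned or all agents liking $o$ are saturated. *)

(* Defs.v *)
From mathcomp Require Import all_boot all_order all_algebra.
From mathcomp Require Import reals sequences exp.
Set Implicit Arguments. Unset Strict Implicit. Unset Printing Implicit Defensive.
Import Order.TTheory GRing.Theory Num.Theory.
Local Open Scope ring_scope.

(* Instance: items 'I_m arrive in index order 0,1,...,m-1 (an arbitrary
   adversarial order is captured by the arbitrary labelling of items);
   agents form a finite type N; cls a : 'I_k is the class of agent a;
   E o a  <=>  agent a likes item o. *)

Section Defs.
Variables (R : realType) (m k : nat) (N : finType).
Variables (cls : N -> 'I_k) (E : 'I_m -> N -> bool).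

Definition frac_matching (X : 'I_m -> N -> R) : Prop :=
  [/\ forall o a, 0 <= X o a <= 1,
      forall o a, ~~ E o a -> X o a = 0,
      forall o, \sum_(a : N) X o a <= 1
    & forall a, \sum_(o : 'I_m) X o a <= 1].

Definition usw (X : 'I_m -> N -> R) : R :=
  \sum_(i < k) \sum_(a : N | cls a == i) \sum_(o : 'I_m) X o a.

Definition deg_before (X : 'I_m -> N -> R) (o : 'I_m) (a : N) : R :=
  \sum_(o' : 'I_m | (o' < o)%N) X o' a.

(* One arrival of item o under EFTT with threshold gam, the current degrees
   being d; y a is the fraction of o given to agent a.  The continuous
   water-filling is described by its water levels:
   - Phase I: class i (capacity c i = mass needed to raise all its agents
     liking o to degree gam) receives min(tau, c i), where tau is the common
     per-class amount poured (equal splitting among active classes), and the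
     total poured in Phase I is min(1, sum_i c i).  Inside class i the mass
     fills the liking agents of minimum degree, i.e. agents liking o are
     raised to max(d a, lvl i).
   - Phase II: the remaining mass r is water-filled among all agents liking o
     up to saturation 1: agents are raised to min(1, max(d1 a, L)), the total
     being min(r, total residual capacity). *)
Definition eftt_step (gam : R) (o : 'I_m) (d : N -> R) (y : N -> R) : Prop :=
  let c := fun i : 'I_k =>
    \sum_(a : N | (cls a == i) && E o a) Num.max 0 (gam - d a) in
  exists (tau : R) (lvl : 'I_k -> R) (L : R),
    let mI := fun i : 'I_k => Num.min tau (c i) in
    let d1 := fun a : N => if E o a then Num.max (d a) (lvl (cls a)) else d a in
    let r := 1 - \sum_(i < k) mI i in
    [/\ 0 <= tau,
        \sum_(i < k) mI i = Num.min 1 (\sum_(i < k) c i),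
        forall i : 'I_k,
          \sum_(a : N | (cls a == i) && E o a) (Num.max (d a) (lvl i) - d a)
            = mI i,
        \sum_(a : N | E o a) (Num.min 1 (Num.max (d1 a) L) - d1 a)
            = Num.min r (\sum_(a : N | E o a) (1 - d1 a))
      & forall a : N,
          y a = if E o a then Num.min 1 (Num.max (d1 a) L) - d a else 0].

Definition eftt_output (gam : R) (X : 'I_m -> N -> R) : Prop :=
  forall o : 'I_m, eftt_step gam o (deg_before X o) (X o).

End Defs.

(* Main.v *)
Require Import Defs.
From mathcomp Require Import all_boot all_order all_algebra.
From mathcomp Require Import reals sequences exp.
From mathcomp Require Import boolp classical_sets topology normedtype.
From mathcomp Require Import lra.
Import Order.TTheory GRing.Theory Num.Theory.
Import numFieldNormedType.Exports.
Local Open Scope ring_scope.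


Ltac nomm t := lazymatch t with
  | context [@Order.max _ _ _ _] => fail
  | context [@Order.min _ _ _ _] => fail
  | _ => idtac end.

Ltac elim_mm :=
  repeat match goal with
  | |- context [@Order.max _ _ ?x ?y] =>
      nomm x; nomm y; let h := fresh "hm" in case: (leP x y) => h
  | |- context [@Order.min _ _ ?x ?y] =>
      nomm x; nomm y; let h := fresh "hm" in case: (leP x y) => h
  end.

Section Gen.
Variable R : realType.

Lemma lip_cont (f : R -> R) (K : R) : 0 <= K ->
  (forall x y, `|f x - f y| <= K * `|x - y|) -> continuous f.
Proof.
move=> K0 Hf x; apply/cvgrPdist_lt => e e0.
have kp : 0 < K + 1 by lra.
have ed : 0 < e / (K + 1) by rewrite divr_gt0.
near=> t.
apply: (le_lt_trans (Hf x t)).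
have h : `|x - t| < e / (K + 1).
  near: t. apply/nbhs_ballP; exists (e / (K + 1)) => // t; rewrite /ball /=.
rewrite ltr_pdivlMr // in h.
have := normr_ge0 (x - t). nra.
Unshelve. all: by end_near.
Qed.

Lemma ivt_lip (f : R -> R) (K a b v : R) : 0 <= K ->
  (forall x y, `|f x - f y| <= K * `|x - y|) -> a <= b -> f a <= v <= f b ->
  exists2 c, a <= c <= b & f c = v.
Proof.
move=> K0 Hf ab /andP[h1 h2].
have [||c ci fc] := @IVT R f a b v ab.
  - by apply: continuous_subspaceT; apply: lip_cont Hf.
  - by rewrite ge_min h1 le_max h2 orbT.
by exists c => //; rewrite in_itv /= in ci.
Qed.

Lemma abs_le (u v : R) : -`|v| <= u <= `|v| -> `|u| <= `|v|.
Proof. by rewrite ler_norml. Qed.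

Lemma lip_sum (I : finType) (P : pred I) (F : I -> R -> R) :
  (forall i x y, `|F i x - F i y| <= `|x - y|) ->
  forall x y, `|\sum_(i | P i) F i x - \sum_(i | P i) F i y|
     <= (\sum_(i | P i) (1 : R)) * `|x - y|.
Proof.
move=> HF x y; rewrite -sumrB mulr_suml.
apply: le_trans (ler_norm_sum _ _ _) _.
by apply: ler_sum => i _; rewrite mul1r.
Qed.

Lemma sum1_ge0 (I : finType) (P : pred I) : 0 <= \sum_(i | P i) (1 : R).
Proof. by apply: sumr_ge0 => i _; exact: ler01. Qed.

Lemma lip_min (c : R) x y : `|Num.min x c - Num.min y c| <= `|x - y|.
Proof.
apply: abs_le; have h1 := ler_norm (x - y); have h2 := ler_norm (- (x - y)).
rewrite normrN in h2. elim_mm; apply/andP; split; lra.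
Qed.

Lemma lip_max (d : R) x y : `|(Num.max d x - d) - (Num.max d y - d)| <= `|x - y|.
Proof.
apply: abs_le; have h1 := ler_norm (x - y); have h2 := ler_norm (- (x - y)).
rewrite normrN in h2. elim_mm; apply/andP; split; lra.
Qed.

Lemma lip_minmax (d : R) x y :
  `|(Num.min 1 (Num.max d x) - d) - (Num.min 1 (Num.max d y) - d)| <= `|x - y|.
Proof.
apply: abs_le; have h1 := ler_norm (x - y); have h2 := ler_norm (- (x - y)).
rewrite normrN in h2. elim_mm; apply/andP; split; lra.
Qed.

(* the dual function *)
Definition cc (gam : R) := expR (gam - 1) / (gam + 1).
Definition GG (gam x : R) :=
  if x <= gam then cc gam * x else cc gam * gam + expR (x - 1) - expR (gam - 1).
Definition hh (gam M : R) := if M <= gam then cc gam else expR (M - 1).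

Variable gam : R.
Hypothesis hg : 0 <= gam <= 1.

Lemma cc_key : cc gam * (gam + 1) = expR (gam - 1).
Proof. case/andP: hg => g0 g1; rewrite /cc divfK //; apply/eqP; lra. Qed.

Lemma cc_ge0 : 0 <= cc gam.
Proof. case/andP: hg => g0 g1; rewrite /cc divr_ge0 // ?expR_ge0 //; lra. Qed.

Lemma cc_le : cc gam <= expR (gam - 1).
Proof.
have := cc_key; have := cc_ge0; case/andP: hg => g0 g1; nra.
Qed.

Lemma exp_le1 (x : R) : x <= 1 -> expR (x - 1) <= 1.
Proof. by move=> h; rewrite expR_le1; lra. Qed.

Lemma exp_mono (x y : R) : x <= y -> expR x <= expR y.
Proof. by rewrite ler_expR. Qed.

Lemma exp_conv (u v : R) : u <= v -> expR v - expR u <= expR v * (v - u).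
Proof.
move=> uv.
have e1 : expR u = expR v * expR (u - v) by rewrite -expRD; congr expR; lra.
have e2 := expR_ge1Dx (u - v).
have e3 := expR_gt0 v.
rewrite e1. nra.
Qed.

Lemma GG0 : GG gam 0 = 0.
Proof. by case/andP: hg => g0 g1; rewrite /GG g0 mulr0. Qed.

Lemma GG_mono x y : x <= y -> GG gam x <= GG gam y.
Proof.
move=> xy; have c0 := cc_ge0; have cl := cc_le; rewrite /GG.
case: ifP => hx; case: ifP => hy.
- by rewrite ler_wpM2l.
- have : expR (gam - 1) <= expR (y - 1) by apply: exp_mono; move/negbT: hy; rewrite -ltNge; lra.
  nra.
- move/negbT: hx; rewrite -ltNge => hx; lra.
- have : expR (x - 1) <= expR (y - 1) by apply: exp_mono; lra.
  lra.
Qed.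

Lemma GG_ge0 x : 0 <= x -> 0 <= GG gam x.
Proof. by move=> x0; rewrite -GG0; apply: GG_mono. Qed.

Lemma GG_inc d e M : 0 <= d -> d <= e -> e <= M ->
  GG gam e - GG gam d <= hh gam M * (e - d).
Proof.
move=> d0 de eM; have c0 := cc_ge0; have cl := cc_le.
rewrite /GG /hh.
case: ifP => he; case: ifP => hd; case: ifP => hM.
- lra.
- have : expR (gam - 1) <= expR (M - 1) by apply: exp_mono; move/negbT: hM; rewrite -ltNge; lra.
  nra.
- have : d <= gam by lra. by rewrite hd.
- have : d <= gam by lra. by rewrite hd.
- have : e <= gam by lra. by rewrite he.
- move/negbT: he; rewrite -ltNge => he.
  have h1 : expR (e - 1) <= expR (M - 1) by apply: exp_mono; lra.
  have h2 := exp_conv (gam - 1) (e - 1) ltac:(lra).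
  have h3 : expR (gam - 1) <= expR (e - 1) by apply: exp_mono; lra.
  have h4 := expR_ge0 (e - 1).
  nra.
- have : e <= gam by lra. by rewrite he.
- move/negbT: he; rewrite -ltNge => he.
  have h1 : expR (e - 1) <= expR (M - 1) by apply: exp_mono; lra.
  have h2 := exp_conv (d - 1) (e - 1) ltac:(lra).
  have h4 := expR_ge0 (e - 1).
  nra.
Qed.

Lemma hh_le1 M : M <= 1 -> hh gam M <= 1.
Proof.
move=> M1; have cl := cc_le; have := exp_le1 gam; case/andP: hg => g0 g1.
rewrite /hh; case: ifP => _ h; [lra | exact: exp_le1].
Qed.

Lemma GG_edge (x : R) : 0 <= x ->
  1 - cc gam <= GG gam x + (1 - hh gam (Num.max x gam)).
Proof.
move=> x0; have ck := cc_key; have := @GG_ge0 x x0.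
rewrite /GG /hh; case: (leP x gam) => hx.
- rewrite lexx /=; lra.
- rewrite mulrDr mulr1 in ck; case: ifP => [h|_]; lra.
Qed.

Lemma GG1 : GG gam 1 = 1 - cc gam.
Proof.
have ck := cc_key; rewrite /GG; case: ifP => h.
- case/andP: hg => g0 g1; have eg : gam = 1 by lra.
  rewrite eg in ck *; rewrite subrr expR0 in ck; lra.
- rewrite subrr expR0; rewrite mulrDr mulr1 in ck; lra.
Qed.

End Gen.
Arguments cc_key {R gam}. Arguments cc_ge0 {R gam}. Arguments cc_le {R gam}.
Arguments GG0 {R gam}. Arguments GG_mono {R gam}. Arguments GG_ge0 {R gam}.
Arguments GG_inc {R gam}. Arguments hh_le1 {R gam}. Arguments GG_edge {R gam}.
Arguments GG1 {R gam}.
Arguments cc {R}. Arguments GG {R}. Arguments hh {R}.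


Lemma eq_min_le {R : realType} {x u v : R} : x = Num.min u v -> x <= v.
Proof. by move=> ->; rewrite ge_min lexx orbT. Qed.

Section Step.
Variables (R : realType) (m k : nat) (N : finType).
Variables (cls : N -> 'I_k) (E : 'I_m -> N -> bool).

Lemma step_props (gam : R) o (d y : N -> R) :
  0 <= gam <= 1 -> (forall a, 0 <= d a <= 1) -> eftt_step cls E gam o d y ->
  [/\ forall a, 0 <= y a /\ d a + y a <= 1,
      forall a, ~~ E o a -> y a = 0,
      \sum_a y a <= 1 &
      forall a, E o a -> d a + y a < 1 ->
        \sum_a y a = 1 /\
        (forall b, 0 < y b -> d b + y b <= Num.max (d a + y a) gam)].
Proof.
move=> /andP[g0 g1] hd [tau [lvl [L]]] /= [t0 hsum hlvl hL hy].
pose d1 := fun a => if E o a then Num.max (d a) (lvl (cls a)) else d a.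
pose Q := \sum_(i < k) Num.min tau
            (\sum_(a | (cls a == i) && E o a) Num.max 0 (gam - d a)).
have hL' : \sum_(a | E o a) (Num.min 1 (Num.max (d1 a) L) - d1 a)
     = Num.min (1 - Q) (\sum_(a | E o a) (1 - d1 a)) := hL.
have hy' : forall a, y a = if E o a then Num.min 1 (Num.max (d1 a) L) - d a else 0
  := hy.
have hA : forall b, E o b -> d b < lvl (cls b) -> lvl (cls b) <= gam.
  move=> b Eb db; rewrite leNgt; apply/negP => gl.
  have hle := eq_min_le (hlvl (cls b)).
  move: hle; apply/negP; rewrite -ltNge.
  rewrite (bigD1 b) /=; last by rewrite eqxx Eb.
  rewrite [X in _ < X](bigD1 b) /=; last by rewrite eqxx Eb.
  apply: ltr_leD.
  - move: db gl; clear -g0; (elim_mm; lra).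
  - apply: ler_sum => a _; move: gl; clear -g0; (elim_mm; lra).
have hd1 : forall a, d a <= d1 a <= 1.
  move=> a; rewrite /d1; case: ifP => Ea; last by have := hd a; lra.
  case: (ltP (d a) (lvl (cls a))) => h.
  - have := hA a Ea h; have := hd a; lra.
  - have := hd a; lra.
have hd1g : forall a, d a < d1 a -> d1 a <= gam.
  move=> a; rewrite /d1; case: ifP => Ea; last by lra.
  case: (ltP (d a) (lvl (cls a))) => h; last by lra.
  by move=> _; apply: hA.
have hQ : \sum_(a | E o a) (d1 a - d a) = Q.
  rewrite (partition_big cls xpredT) //=; apply: eq_bigr => i _.
  rewrite -hlvl; apply: eq_big => a; first by rewrite andbC.
  by move=> /andP[Ea /eqP <-]; rewrite /d1 Ea.
have hsy : \sum_a y a = Q + Num.min (1 - Q) (\sum_(a | E o a) (1 - d1 a)).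
  rewrite -hL' -hQ -big_split /= [RHS]big_mkcond [LHS]big_mkcond /=; apply: eq_bigr => a _.
  by rewrite hy'; case: ifP => // _; lra.
have hQ1 : Q <= 1 by rewrite /Q hsum ge_min lexx.
have hS2 : 0 <= \sum_(a | E o a) (1 - d1 a).
  by apply: sumr_ge0 => a _; have := hd1 a; lra.
split.
- move=> a; rewrite hy'; case: ifP => Ea; last by have := hd a; lra.
  have := hd1 a; set u := d1 a; move=> hu; have := hd a.
  move: hu; clear -g0. (elim_mm; lra).
- by move=> a nE; rewrite hy' (negbTE nE).
- rewrite hsy; move: hQ1 hS2; clear -g0; (elim_mm; lra).
move=> a Ea; rewrite hy' Ea => ha.
have hmin : Num.min (1 - Q) (\sum_(a | E o a) (1 - d1 a)) = 1 - Q.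
  case: (leP (1 - Q) (\sum_(a | E o a) (1 - d1 a))) => // hlt.
  exfalso.
  have h0 : \sum_(a | E o a) (1 - Num.min 1 (Num.max (d1 a) L)) = 0.
    have : \sum_(a | E o a) (1 - Num.min 1 (Num.max (d1 a) L)) =
      \sum_(a | E o a) (1 - d1 a) - \sum_(a | E o a) (Num.min 1 (Num.max (d1 a) L) - d1 a).
      by rewrite -sumrB; apply: eq_bigr => b _; lra.
    move=> ->; rewrite hL'; rewrite (min_r (ltW hlt)); lra.
  have hz : 1 - Num.min 1 (Num.max (d1 a) L) = 0.
    by apply: (psumr_eq0P _ h0 Ea) => b _; clear -g0; (elim_mm; lra).
  by move: ha hz; clear -g0; (elim_mm; lra).
split; first by rewrite hsy hmin; lra.
move=> b; rewrite hy'; case: ifP => Eb; last by lra.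
move=> yb.
have eaL : L <= Num.min 1 (Num.max (d1 a) L).
  by move: ha; set ua := d1 a; clear -g0; (elim_mm; lra).
have hb1 : d b + (Num.min 1 (Num.max (d1 b) L) - d b) <= Num.max L (d1 b).
  by have := hd1 b; set ub := d1 b; clear -g0; (elim_mm; lra).
rewrite le_max; apply/orP.
case: (leP (d1 b) L) => hbl in hb1 *.
- by left; lra.
- right; have : d b < d1 b by move: yb hbl; have := hd1 b; set ub := d1 b; clear -g0; (elim_mm; lra).
  by move=> /hd1g; lra.
Qed.

End Step.
Arguments step_props {R m k N cls E gam o d y}.


Section Main.
Variables (R : realType) (m k : nat) (N : finType).
Variables (cls : N -> 'I_k) (E : 'I_m -> N -> bool).

Definition PP (X : 'I_m -> N -> R) (j : nat) (a : N) :=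
  \sum_(o : 'I_m | (o < j)%N) X o a.

Lemma sum_ltS (F : 'I_m -> R) (o : 'I_m) :
  \sum_(o' : 'I_m | (o' < o.+1)%N) F o' = F o + \sum_(o' : 'I_m | (o' < o)%N) F o'.
Proof.
rewrite (bigD1 o) /=; last by rewrite ltnSn.
congr (_ + _); apply: eq_bigl => o' /=.
by rewrite ltnS ltn_neqAle andbC.
Qed.

Lemma PP0 X a : PP X 0 a = 0.
Proof. by rewrite /PP big_pred0 // => o; rewrite ltn0. Qed.

Lemma PPm X a : PP X m a = \sum_o X o a.
Proof. by apply: eq_bigl => o; rewrite ltn_ord. Qed.

Lemma PPS X (o : 'I_m) a : PP X o.+1 a = X o a + PP X o a.
Proof. exact: sum_ltS. Qed.

Lemma deg_bounds {gam : R} {X} : 0 <= gam <= 1 -> eftt_output cls E gam X ->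
  forall j, (j <= m)%N -> forall a, 0 <= PP X j a <= 1.
Proof.
move=> hg hX; elim=> [|j IH] hj a; first by rewrite PP0 lexx ler01.
have hjm : (j < m)%N := hj.
have IH' := IH (ltnW hj).
have := @step_props R m k N cls E gam (Ordinal hjm) (PP X j) (X (Ordinal hjm)) hg IH' (hX _).
case=> h1 _ _ _.
have -> : PP X j.+1 a = X (Ordinal hjm) a + PP X j a := PPS X (Ordinal hjm) a.
have := h1 a; have := IH' a; lra.
Qed.

Lemma usw_eq (Y : 'I_m -> N -> R) : usw cls Y = \sum_a \sum_o Y o a.
Proof.
rewrite /usw [RHS](partition_big cls xpredT) //=.
Qed.

Lemma main_bound (gam : R) (X Xs : 'I_m -> N -> R) : 0 <= gam <= 1 -> eftt_output cls E gam X ->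
  frac_matching E Xs -> (1 - cc gam) * usw cls Xs <= usw cls X.
Proof.
move=> hg hX [h01 hE hrow hcol].
have hD : forall (o : 'I_m) a, 0 <= PP X o a <= 1.
  by move=> o; apply: (deg_bounds hg hX); exact: ltnW.
have hS := fun o : 'I_m =>
  @step_props R m k N cls E gam o (PP X o) (X o) hg (hD o) (hX o).
have X0 : forall o a, 0 <= X o a.
  by move=> o a; case: (hS o) => h _ _ _; case: (h a).
have X1 : forall (o : 'I_m) a, PP X o a + X o a <= 1.
  by move=> o a; case: (hS o) => h _ _ _; case: (h a).
have mono : forall j a, PP X j a <= \sum_o X o a.
  move=> j a; rewrite /PP [X in _ <= X](bigID (fun o : 'I_m => (o < j)%N)) /=.
  by rewrite lerDl; apply: sumr_ge0 => o _.
have tel : forall a j, (j <= m)%N ->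
    \sum_(o : 'I_m | (o < j)%N) (GG gam (PP X o a + X o a) - GG gam (PP X o a))
    = GG gam (PP X j a).
  move=> a; elim=> [|j IH] hj.
    by rewrite big_pred0 ?PP0 ?GG0 // => o; rewrite ltn0.
  have hjm : (j < m)%N := hj.
  have -> : PP X j.+1 a = X (Ordinal hjm) a + PP X j a := PPS X (Ordinal hjm) a.
  rewrite (sum_ltS _ (Ordinal hjm)) /= IH; last exact: ltnW.
  by rewrite subrK addrC.
pose alpha a := GG gam (\sum_o X o a).
pose beta o := \sum_a (X o a - (GG gam (PP X o a + X o a) - GG gam (PP X o a))).
have ident : \sum_a alpha a + \sum_o beta o = \sum_o \sum_a X o a.
  rewrite /beta /=; under [X in _ + X = _]eq_bigr => o _ do rewrite sumrB.
  rewrite sumrB [X in _ - X]exchange_big /=.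
  have tel' : forall a, \sum_(o : 'I_m) (GG gam (PP X o a + X o a) - GG gam (PP X o a)) = alpha a.
    move=> a; rewrite /alpha -PPm -(tel a m) //.
    by apply: eq_bigl => o; rewrite ltn_ord.
  under [X in _ - X]eq_bigr => a _ do rewrite tel'.
  by rewrite addrC subrK.
have alpha0 : forall a, 0 <= alpha a.
  by move=> a; apply: GG_ge0 => //; apply: sumr_ge0.
have beta0 : forall o, 0 <= beta o.
  move=> o; apply: sumr_ge0 => b _.
  have h := GG_inc hg (PP X o b) (PP X o b + X o b) 1.
  have := hD o b; have := X0 o b; have := X1 o b.
  have := hh_le1 hg 1 (lexx _).
  move=> hh1 x1 x0 /andP[d0 d1].
  have := h d0 ltac:(lra) x1; nra.
have edge : forall o a, E o a -> 1 - cc gam <= alpha a + beta o.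
  move=> o a Ea.
  have hx0 : 0 <= PP X o a + X o a by have := hD o a; have := X0 o a; lra.
  have hal : GG gam (PP X o a + X o a) <= alpha a.
    apply: GG_mono; have := mono o.+1 a; rewrite PPS; lra.
  case: (ltP (PP X o a + X o a) 1) => hx.
  - case: (hS o) => _ _ _ /(_ a Ea hx) [hsum1 hrecv].
    have hβ : 1 - hh gam (Num.max (PP X o a + X o a) gam) <= beta o.
      rewrite /beta /= sumrB hsum1; apply: lerB => //.
      have -> : hh gam (Num.max (PP X o a + X o a) gam) =
                \sum_b hh gam (Num.max (PP X o a + X o a) gam) * X o b.
        by rewrite -mulr_sumr hsum1 mulr1.
      apply: ler_sum => b _.
      have := X0 o b; rewrite le_eqVlt => /orP[/eqP <-|pos].
        by rewrite addr0 subrr mulr0.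
      have := GG_inc hg (PP X o b) (PP X o b + X o b) (Num.max (PP X o a + X o a) gam).
      rewrite [PP X o b + X o b - _]addrC addKr; apply.
      + by have := hD o b; case/andP.
      + by rewrite lerDl; exact: X0.
      + exact: hrecv.
    have := GG_edge hg _ hx0; lra.
  - have h1 : GG gam 1 <= GG gam (PP X o a + X o a) by apply: GG_mono.
    rewrite (GG1 hg) in h1; have := beta0 o; lra.
rewrite !usw_eq [X in _ <= X]exchange_big /= -ident.
have step1 : (1 - cc gam) * \sum_a \sum_o Xs o a <=
   \sum_a \sum_o (Xs o a * alpha a) + \sum_a \sum_o (Xs o a * beta o).
  rewrite -big_split /= mulr_sumr; apply: ler_sum => a _.
  rewrite -big_split /= mulr_sumr; apply: ler_sum => o _.
  rewrite -mulrDr; case: (boolP (E o a)) => Ea.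
  - rewrite mulrC; apply: ler_wpM2l; last exact: edge.
    by have := h01 o a; case/andP.
  - by rewrite hE // mulr0 mul0r.
have step2 : \sum_a \sum_o (Xs o a * alpha a) <= \sum_a alpha a.
  apply: ler_sum => a _; rewrite -mulr_suml mulrC; exact: ler_piMr.
have step3 : \sum_a \sum_o (Xs o a * beta o) <= \sum_o beta o.
  rewrite exchange_big /=; apply: ler_sum => o _.
  rewrite -mulr_suml mulrC; exact: ler_piMr.
lra.
Qed.

End Main.
Arguments PP {R m N}. Arguments PP0 {R m N}. Arguments PPS {R m N}. Arguments PPm {R m N}.
Arguments main_bound {R m k N cls E gam X Xs}.


Fixpoint degf {R : realType} {m : nat} {N : finType}
  (stp : 'I_m -> (N -> R) -> N -> R) (j : nat) : N -> R :=
  match j with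
  | 0 => fun _ => 0
  | j'.+1 => fun a => degf stp j' a +
      match @insub _ (fun x => (x < m)%N) 'I_m j' with
      | Some o => stp o (degf stp j') a
      | None => 0
      end
  end.

Section Exist.
Variables (R : realType) (m k : nat) (N : finType).
Variables (cls : N -> 'I_k) (E : 'I_m -> N -> bool).

Lemma step_exists (gam : R) o (d : N -> R) : 0 <= gam <= 1 ->
  (forall a, 0 <= d a <= 1) -> exists y, eftt_step cls E gam o d y.
Proof.
move=> /andP[g0 g1] hd.
pose c := fun i : 'I_k => \sum_(a | (cls a == i) && E o a) Num.max 0 (gam - d a).
have c0 : forall i, 0 <= c i.
  by move=> i; apply: sumr_ge0 => a _; rewrite le_max lexx.
pose S := \sum_(i < k) c i.
have cS : forall i, c i <= S.
  move=> i; rewrite /S (bigD1 i) //= lerDl; apply: sumr_ge0 => j _; exact: c0.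
have S0 : 0 <= S by apply: sumr_ge0 => i _; exact: c0.
have [tau /andP[t0 tS] Ftau] : exists2 tau, 0 <= tau <= S &
    \sum_(i < k) Num.min tau (c i) = Num.min 1 S.
  apply: (@ivt_lip R (fun t => \sum_(i < k) Num.min t (c i)) (\sum_(i < k) (1 : R))).
  - by apply: sumr_ge0 => i _; exact: ler01.
  - move=> x y /=; apply: (@lip_sum R _ xpredT (fun i t => Num.min t (c i))) => i u v.
    exact: lip_min.
  - exact: S0.
  - apply/andP; split.
    + rewrite big1 ?le_min ?ler01 ?S0 // => i _; exact: (min_l (c0 i)).
    + rewrite (eq_bigr c) ?ge_min ?lexx ?orbT // => i _; exact: (min_r (cS i)).
have hl : forall i, exists l, 0 <= l <= gam /\
    \sum_(a | (cls a == i) && E o a) (Num.max (d a) l - d a) = Num.min tau (c i).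
  move=> i.
  have [l lb fl] : exists2 l, 0 <= l <= gam &
      \sum_(a | (cls a == i) && E o a) (Num.max (d a) l - d a) = Num.min tau (c i).
    apply: (@ivt_lip R (fun t => \sum_(a | (cls a == i) && E o a) (Num.max (d a) t - d a))
              (\sum_(a | (cls a == i) && E o a) (1 : R))).
    - by apply: sumr_ge0 => a _; exact: ler01.
    - move=> x y /=; apply: (@lip_sum R _ _ (fun a t => Num.max (d a) t - d a)) => a u v.
      exact: lip_max.
    - exact: g0.
    - apply/andP; split.
      + rewrite big1 ?le_min ?t0 ?c0 // => a _.
        by have := hd a; case/andP => h _; rewrite (max_l h) subrr.
      + rewrite (eq_bigr (fun a => Num.max 0 (gam - d a))) ?ge_min ?lexx ?orbT //.
        by move=> a _; have := hd a; elim_mm; lra.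
  by exists l.
case: (choice hl) => lvl hlvl.
pose d1 a := if E o a then Num.max (d a) (lvl (cls a)) else d a.
have hd1 : forall a, 0 <= d1 a <= 1.
  move=> a; rewrite /d1; case: ifP => _; last exact: hd.
  have [/andP[l0 lg] _] := hlvl (cls a).
  move: (hd a) l0 lg; elim_mm; lra.
pose Q := \sum_(i < k) Num.min tau (c i).
pose S2 := \sum_(a | E o a) (1 - d1 a).
have Q1 : Q <= 1 by rewrite /Q Ftau ge_min lexx.
have S20 : 0 <= S2 by apply: sumr_ge0 => a _; have := hd1 a; lra.
have [L _ FL] : exists2 L, 0 <= L <= 1 &
    \sum_(a | E o a) (Num.min 1 (Num.max (d1 a) L) - d1 a) = Num.min (1 - Q) S2.
  apply: (@ivt_lip R (fun t => \sum_(a | E o a) (Num.min 1 (Num.max (d1 a) t) - d1 a))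
              (\sum_(a | E o a) (1 : R))).
  - by apply: sumr_ge0 => a _; exact: ler01.
  - move=> x y /=; apply: (@lip_sum R _ _ (fun a t => Num.min 1 (Num.max (d1 a) t) - d1 a)) => a u v.
    exact: lip_minmax.
  - exact: ler01.
  - apply/andP; split.
    + rewrite big1 ?le_min ?S20 //; first by apply/andP; split => //; lra.
      by move=> a _; have := hd1 a; set u := d1 a; elim_mm; lra.
    + rewrite [X in _ <= X](eq_bigr (fun a => 1 - d1 a)) ?ge_min ?lexx ?orbT //.
      by move=> a _; have := hd1 a; set u := d1 a; elim_mm; lra.
exists (fun a => if E o a then Num.min 1 (Num.max (d1 a) L) - d a else 0).
exists tau, lvl, L; split.
- exact: t0.
- exact: Ftau.
- by move=> i; have [_ ->] := hlvl i.
- exact: FL.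
- by [].
Qed.

Lemma exists_output (gam : R) : 0 <= gam <= 1 ->
  exists X : 'I_m -> N -> R, eftt_output cls E gam X.
Proof.
move=> hg.
have hs : forall p : 'I_m * (N -> R), exists y : N -> R,
    (forall a, 0 <= p.2 a <= 1) -> eftt_step cls E gam p.1 p.2 y.
  move=> [o d] /=; case: (pselect (forall a, 0 <= d a <= 1)) => hd.
  - by have [y hy] := @step_exists gam o d hg hd; exists y.
  - by exists (fun _ => 0).
case: (choice hs) => stp hstp.
pose st := fun (o : 'I_m) (d : N -> R) => stp (o, d).
pose X := fun o : 'I_m => st o (degf st o).
have key : forall j, (j <= m)%N ->
    PP X j = degf st j /\ forall a, 0 <= degf st j a <= 1.
  elim=> [|j IH] hj.
    split; first by apply: funext => a; rewrite PP0.
    by move=> a /=; rewrite lexx ler01.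
  have hjm : (j < m)%N := hj.
  have [IH1 IH2] := IH (ltnW hj).
  have hstep : eftt_step cls E gam (Ordinal hjm) (degf st j) (X (Ordinal hjm)).
    exact: (hstp (Ordinal hjm, degf st j) IH2).
  have ins : @insub _ (fun x => (x < m)%N) 'I_m j = Some (Ordinal hjm)
    := valK (Ordinal hjm).
  have [hp _ _ _] := step_props hg IH2 hstep.
  have e : PP X j.+1 = degf st j.+1.
    apply: funext => a.
    rewrite (PPS X (Ordinal hjm) a) /= IH1 ins addrC.
    by [].
  split => // a; rewrite -e.
  rewrite (PPS X (Ordinal hjm) a) /= IH1.
  have [h1 h2] := hp a. have := IH2 a. lra.
exists X => o.
have [e1 b1] := key o (ltnW (ltn_ord o)).
have : eftt_step cls E gam o (PP X o) (X o).
  rewrite e1; exact: (hstp (o, degf st o) b1).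
by [].
Qed.

End Exist.

Theorem lemma1 (R : realType) (m k : nat) (N : finType)
    (cls : N -> 'I_k) (E : 'I_m -> N -> bool) (gam : R) :
  0 <= gam <= 1 ->
  (exists X : 'I_m -> N -> R, eftt_output cls E gam X) /\
  (forall X : 'I_m -> N -> R, eftt_output cls E gam X ->
   forall Xs : 'I_m -> N -> R, frac_matching E Xs ->
     (1 - expR (gam - 1) / (gam + 1)) * usw cls Xs <= usw cls X).
Proof.
move=> hg; split; first exact: exists_output.
move=> X hX Xs hXs; exact: (main_bound hg hX hXs).
Qed.
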